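(* In the setting of the context, for all $u$ with $u_\infty<u\le u_0$, \[ \beta N-\beta\tilde S e^{(\beta/\gamma)\tilde R}u+\gamma\log u>\psi(u)>0 \] and \[ \beta N-\beta\tilde S e^{(\beta/\gamma)\tilde R}u+\gamma\log u>\beta\Bigl(\tilde E e^{-\delta\varphi(u)}+\tilde S e^{(\beta/\gamma)\tilde R}e^{-\delta\varphi(u)}\int_u^{u_0}e^{\delta\varphi(v)}dv\Bigr)>0 . \]
   Context: Let $\beta,\gamma,\delta>0$ be constants and $\tilde S,\tilde E,\tilde I,\tilde R$ real numbers with $N:=\tilde S+\tilde E+\tilde I+\tilde R>0$. Standing assumptions: (A1) $\tilde I>0$; (A2) $\tilde E>(\gamma/\delta)\tilde I$; (A3) $\tilde S>\delta\tilde E/(\beta\tilde I)$; (A4) $\tilde R\ge 0$ and $N>\tilde S e^{(\beta/\gamma)\tilde R}+\tilde R$. Let $\alpha$ be the unique solution in $(\tilde R,N)$ of $x=N-\tilde S e^{(\beta/\gamma)\tilde R}e^{-(\beta/\gamma)x}$, and assume (A5) $\tilde S<(\gamma/\beta)e^{(\beta/\gamma)(\alpha-\tilde R)}$. Put $u_0:=e^{-(\beta/\gamma)\tilde R}$, $u_\infty:=e^{-(\beta/\gamma)\alpha}$. Let $\psi$ be the unique function, continuous and positive on $(u_\infty,u_0]$ and $C^1$ on $(u_\infty,u_0)$, satisfying $\psi'(u)\psi(u)-\frac{\gamma+\delta}{u}\psi(u)=-\delta\,\frac{\beta N-\beta\tilde S e^{(\beta/\gamma)\tilde R}u+\gamma\log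 u}{u}$ on $(u_\infty,u_0)$ and $\psi(u_0)=\beta\tilde I$. Let $\varphi(u):=\int_u^{u_0}\frac{d\xi}{\xi\psi(\xi)}$ for $u\in(u_\infty,u_0]$. *)

(* Defs.v *)
From Stdlib Require Import Reals.
From Coquelicot Require Import Coquelicot.
Open Scope R_scope.

Definition continuous_on_Ioc (f : R -> R) (a b : R) : Prop :=
  forall u, a < u <= b ->
    filterlim f (within (fun x => a < x <= b) (locally u)) (locally (f u)).

Definition C1_on_Ioo (f : R -> R) (a b : R) : Prop :=
  (forall u, a < u < b -> ex_derive f u) /\
  (forall u, a < u < b -> continuous (Derive f) u).

Definition Fsir (beta gamma N S Rt u : R) : R :=
  beta * N - beta * S * exp ((beta / gamma) * Rt) * u + gamma * ln u.

Definition phi_of (psi : R -> R) (u0 u : R) : R :=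
  RInt (fun xi => / (xi * psi xi)) u u0.

(* Main.v *)
Require Import Defs.
From Stdlib Require Import Reals Lra.
From Coquelicot Require Import Coquelicot.
Open Scope R_scope.

Lemma derive_val (f : R -> R) x l l' : is_derive f x l -> l = l' -> is_derive f x l'.
Proof. intros H ->; exact H. Qed.

Lemma ps_cont (psi : R -> R) (a u0 x : R) : a < u0 ->
  (forall u, a < u <= u0 ->
    filterlim psi (within (fun x => a < x <= u0) (locally u)) (locally (psi u))) ->
  a < x -> continuous (fun y => psi (Rmin y u0)) x.
Proof.
  intros Hau Hc Hx.
  destruct (Rle_or_lt x u0) as [Hle|Hlt].
  - unfold continuous. rewrite (Rmin_left _ _ Hle).
    eapply filterlim_comp; [|apply (Hc x); lra].
    intros P [eps HP].
    assert (Hd : 0 < Rmin eps (x - a)) by (apply Rmin_glb_lt; [apply cond_pos|lra]).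
    exists (mkposreal _ Hd). intros y Hy.
    change (Rabs (y - x) < Rmin eps (x - a)) in Hy.
    pose proof (Rmin_l eps (x-a)). pose proof (Rmin_r eps (x-a)).
    apply Rabs_lt_between' in Hy.
    apply HP.
    + change (Rabs (Rmin y u0 - x) < eps).
      apply Rabs_lt_between'. unfold Rmin; destruct (Rle_dec y u0); lra.
    + unfold Rmin; destruct (Rle_dec y u0); lra.
  - apply continuous_ext_loc with (fun _ => psi u0); [|apply continuous_const].
    assert (Hd : 0 < x - u0) by lra.
    exists (mkposreal _ Hd). intros y Hy.
    change (Rabs (y - x) < x - u0) in Hy.
    apply Rabs_lt_between' in Hy.
    rewrite Rmin_right; lra.
Qed.

Lemma deriv_RInt_lower (f : R -> R) (a u0 v : R) : a < u0 ->
  (forall x, a < x -> continuous f x) -> a < v ->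
  is_derive (fun y => RInt f y u0) v (- f v).
Proof.
  intros Hau Hc Hv.
  apply (is_derive_RInt' (V:=R_NormedModule) f (fun y => RInt f y u0) v u0); [|apply Hc; lra].
  assert (Hd : 0 < v - a) by lra.
  exists (mkposreal _ Hd). intros y Hy.
  change (Rabs (y - v) < v - a) in Hy.
  apply Rabs_lt_between' in Hy.
  apply (RInt_correct (V:=R_CompleteNormedModule)), ex_RInt_continuous.
  intros z Hz. apply Hc.
  assert (Rmin y u0 > a) by (unfold Rmin; destruct (Rle_dec y u0); lra). lra.
Qed.

Lemma core (beta gamma delta K E a u0 : R) (psi F : R -> R)
  (Ha : 0 < a) (Hau : a < u0)
  (Hc : forall u, a < u <= u0 ->
    filterlim psi (within (fun x => a < x <= u0) (locally u)) (locally (psi u)))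
  (Hpos : forall u, a < u <= u0 -> 0 < psi u)
  (Hd : forall u, a < u < u0 -> ex_derive psi u)
  (Hode : forall u, a < u < u0 ->
     Derive psi u * psi u - (gamma + delta) / u * psi u = - delta * (F u / u))
  (HF : forall v, a < v -> is_derive F v (-(beta*K) + gamma / v))
  (HF0 : F u0 - psi u0 = beta * E) :
  forall u, a < u <= u0 ->
    F u - psi u = beta * (E * exp (- delta * RInt (fun xi => / (xi * psi xi)) u u0)
      + K * exp (- delta * RInt (fun xi => / (xi * psi xi)) u u0)
        * RInt (fun v => exp (delta * RInt (fun xi => / (xi * psi xi)) v u0)) u u0)
    /\ 0 <= RInt (fun v => exp (delta * RInt (fun xi => / (xi * psi xi)) v u0)) u u0.
Proof.
  set (ps := fun y => psi (Rmin y u0)).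
  set (h := fun y => / (y * ps y)).
  set (Phi := fun y => RInt h y u0).
  set (g := fun y => exp (delta * Phi y)).
  set (Psi := fun y => RInt g y u0).
  set (W := fun y => (F y - ps y) * g y - beta * K * Psi y).
  assert (Hps : forall x, a < x -> continuous ps x) by (intros; apply ps_cont with a; auto).
  assert (Hpsp : forall x, a < x -> 0 < ps x).
  { intros x Hx; unfold ps; apply Hpos; unfold Rmin; destruct (Rle_dec x u0); lra. }
  assert (Hh : forall x, a < x -> continuous h x).
  { intros x Hx. unfold h. apply continuous_Rinv_comp.
    - apply (continuous_mult (fun y => y) ps). apply continuous_id. auto.
    - pose proof (Hpsp x Hx). apply Rgt_not_eq. apply Rmult_lt_0_compat; lra. }
  assert (HPhi : forall x, a < x -> is_derive Phi x (- h x)).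
  { intros; apply deriv_RInt_lower with a; auto. }
  assert (Hg : forall x, a < x -> is_derive g x (delta * (- h x) * g x)).
  { intros x Hx. unfold g.
    eapply derive_val.
    - apply (is_derive_comp exp (fun y => delta * Phi y)). apply is_derive_exp.
      apply is_derive_scal. auto.
    - reflexivity. }
  assert (Hgc : forall x, a < x -> continuous g x).
  { intros x Hx. apply (ex_derive_continuous (K:=R_AbsRing) (V:=R_NormedModule)). eexists. apply Hg; auto. }
  assert (HPsi : forall x, a < x -> is_derive Psi x (- g x)).
  { intros; apply deriv_RInt_lower with a; auto. }
  assert (Hpsd : forall v, a < v < u0 -> is_derive ps v (Derive psi v)).
  { intros v Hv. apply is_derive_ext_loc with psi.
    - assert (Hdd : 0 < u0 - v) by lra.
      exists (mkposreal _ Hdd). intros y Hy.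
      change (Rabs (y - v) < u0 - v) in Hy. apply Rabs_lt_between' in Hy.
      unfold ps; rewrite Rmin_left; lra.
    - apply Derive_correct. auto. }
  assert (HW : forall v, a < v < u0 -> is_derive W v 0).
  { intros v Hv. unfold W.
    eapply derive_val.
    - apply (is_derive_minus (fun y => (F y - ps y) * g y) (fun y => beta * K * Psi y)).
      + apply (is_derive_mult (fun y => F y - ps y) g).
        * apply (is_derive_minus F ps). apply HF; lra. apply Hpsd; lra.
        * apply Hg; lra.
        * intros; apply Rmult_comm.
      + apply is_derive_scal. apply HPsi; lra.
    - pose proof (Hode v Hv) as Ho.
      assert (Hpv : ps v = psi v) by (unfold ps; rewrite Rmin_left; lra).
      assert (Hpv0 : 0 < psi v) by (apply Hpos; lra).
      unfold h. rewrite Hpv.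
      unfold minus, plus, opp, mult; simpl.
      assert (Hde : Derive psi v = ((gamma + delta) / v * psi v - delta * (F v / v)) / psi v).
      { assert (X: (gamma+delta)/v*psi v - delta*(F v/v) = Derive psi v * psi v) by lra. rewrite X. field. lra. }
      rewrite Hde. field. lra. }
  intros u Hu.
  assert (HWc : forall x, a < x -> continuous W x).
  { intros x Hx. unfold W.
    apply (continuous_minus (fun y => (F y - ps y) * g y) (fun y => beta*K*Psi y)).
    - apply (continuous_mult (fun y => F y - ps y) g).
      + apply (continuous_minus F ps).
        * apply (ex_derive_continuous (K:=R_AbsRing) (V:=R_NormedModule)). eexists; apply HF; lra.
        * auto.
      + auto.
    - apply (continuous_scal_r (beta*K) Psi).
      apply (ex_derive_continuous (K:=R_AbsRing) (V:=R_NormedModule)). eexists; apply HPsi; auto. }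
  assert (HWeq : W u = W u0).
  { destruct (Req_dec u u0) as [->|Hne]; [reflexivity|].
    destruct (MVT_gen W u u0 (fun _ => 0)) as [c [_ Hcv]].
    - rewrite Rmin_left, Rmax_right by lra. intros; apply HW; lra.
    - rewrite Rmin_left, Rmax_right by lra. intros x Hx. apply continuity_pt_filterlim. apply HWc; lra.
    - lra. }
  assert (HW0 : W u0 = beta * E).
  { unfold W, Psi, g, Phi. rewrite !RInt_point. unfold ps; rewrite Rmin_left by lra.
    unfold zero; simpl. rewrite Rmult_0_r, exp_0. lra. }
  assert (Hphi : forall x, a < x <= u0 -> RInt (fun xi => /(xi*psi xi)) x u0 = Phi x).
  { intros x Hx. unfold Phi. apply RInt_ext. intros y Hy.
    rewrite Rmin_left, Rmax_right in Hy by lra. unfold h, ps. rewrite Rmin_left by lra. reflexivity. }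
  assert (HPsieq : RInt (fun v => exp (delta * RInt (fun xi => /(xi*psi xi)) v u0)) u u0 = Psi u).
  { unfold Psi. apply RInt_ext. intros y Hy. rewrite Rmin_left, Rmax_right in Hy by lra.
    unfold g. rewrite Hphi by lra. reflexivity. }
  rewrite HPsieq, Hphi by lra.
  split.
  - rewrite HW0 in HWeq. unfold W in HWeq.
    assert (Hpu : ps u = psi u) by (unfold ps; rewrite Rmin_left; lra).
    rewrite Hpu in HWeq. unfold g in HWeq.
    assert (He : exp (- delta * Phi u) = / exp (delta * Phi u)).
    { rewrite <- exp_Ropp; f_equal; ring. }
    rewrite He. assert (Hep : 0 < exp (delta * Phi u)) by apply exp_pos.
    replace (F u - psi u) with (((F u - psi u) * exp (delta * Phi u)) / exp (delta * Phi u)) by (field; lra).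
    replace ((F u - psi u) * exp (delta * Phi u)) with (beta * E + beta * K * Psi u) by lra.
    field. lra.
  - unfold Psi. apply RInt_ge_0; [lra| |intros; left; apply exp_pos].
    apply (ex_RInt_continuous (V:=R_CompleteNormedModule)). rewrite Rmin_left by lra. intros z Hz. apply Hgc. lra.
Qed.

Theorem proposition1
  (beta gamma delta St Et It Rt alpha : R) (psi : R -> R)
  (Hbeta : 0 < beta) (Hgamma : 0 < gamma) (Hdelta : 0 < delta)
  (HN : 0 < St + Et + It + Rt)
  (A1 : 0 < It)
  (A2 : Et > (gamma / delta) * It)
  (A3 : St > delta * Et / (beta * It))
  (A4a : 0 <= Rt)
  (A4b : St + Et + It + Rt > St * exp ((beta / gamma) * Rt) + Rt)
  (Halpha_int : Rt < alpha < St + Et + It + Rt)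
  (Halpha_eq : alpha = (St + Et + It + Rt)
                 - St * exp ((beta / gamma) * Rt) * exp (- (beta / gamma) * alpha))
  (A5 : St < (gamma / beta) * exp ((beta / gamma) * (alpha - Rt)))
  (Hpsi_cont : continuous_on_Ioc psi (exp (- (beta / gamma) * alpha))
                                      (exp (- (beta / gamma) * Rt)))
  (Hpsi_pos : forall u, exp (- (beta / gamma) * alpha) < u <= exp (- (beta / gamma) * Rt) ->
                0 < psi u)
  (Hpsi_C1 : C1_on_Ioo psi (exp (- (beta / gamma) * alpha)) (exp (- (beta / gamma) * Rt)))
  (Hpsi_ode : forall u, exp (- (beta / gamma) * alpha) < u < exp (- (beta / gamma) * Rt) ->
                Derive psi u * psi u - (gamma + delta) / u * psi u
                = - delta * (Fsir beta gamma (St + Et + It + Rt) St Rt u / u))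
  (Hpsi_u0 : psi (exp (- (beta / gamma) * Rt)) = beta * It) :
  forall u, exp (- (beta / gamma) * alpha) < u <= exp (- (beta / gamma) * Rt) ->
    (Fsir beta gamma (St + Et + It + Rt) St Rt u > psi u /\ psi u > 0) /\
    (Fsir beta gamma (St + Et + It + Rt) St Rt u >
       beta * (Et * exp (- delta * phi_of psi (exp (- (beta / gamma) * Rt)) u)
               + St * exp ((beta / gamma) * Rt)
                 * exp (- delta * phi_of psi (exp (- (beta / gamma) * Rt)) u)
                 * RInt (fun v => exp (delta * phi_of psi (exp (- (beta / gamma) * Rt)) v))
                        u (exp (- (beta / gamma) * Rt)))
     /\ beta * (Et * exp (- delta * phi_of psi (exp (- (beta / gamma) * Rt)) u)
               + St * exp ((beta / gamma) * Rt)
                 * exp (- delta * phi_of psi (exp (- (beta / gamma) * Rt)) u)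
                 * RInt (fun v => exp (delta * phi_of psi (exp (- (beta / gamma) * Rt)) v))
                        u (exp (- (beta / gamma) * Rt))) > 0).
Proof.
  intros u Hu.
  assert (Hc : 0 < beta / gamma) by (apply Rdiv_lt_0_compat; lra).
  assert (Ha : 0 < exp (- (beta / gamma) * alpha)) by apply exp_pos.
  assert (Hau : exp (- (beta / gamma) * alpha) < exp (- (beta / gamma) * Rt)).
  { apply exp_increasing. nra. }
  assert (HE : 0 < Et).
  { assert (0 < gamma / delta) by (apply Rdiv_lt_0_compat; lra). nra. }
  assert (HS : 0 < St).
  { assert (0 < delta * Et / (beta * It)).
    { apply Rdiv_lt_0_compat; nra. } lra. }
  destruct Hpsi_C1 as [Hd _].
  destruct (core beta gamma delta (St * exp ((beta / gamma) * Rt)) Et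
              (exp (- (beta / gamma) * alpha)) (exp (- (beta / gamma) * Rt)) psi
              (Fsir beta gamma (St + Et + It + Rt) St Rt) Ha Hau Hpsi_cont Hpsi_pos Hd Hpsi_ode)
    with u as [Heq Hnn]; auto.
  - intros v Hv. unfold Fsir. auto_derive.
    + lra.
    + field. lra.
  - unfold Fsir. rewrite ln_exp, Hpsi_u0.
    assert (H1 : exp ((beta / gamma) * Rt) * exp (- (beta / gamma) * Rt) = 1).
    { rewrite <- exp_plus. replace ((beta / gamma) * Rt + - (beta / gamma) * Rt) with 0 by ring.
      apply exp_0. }
    replace (beta * St * exp (beta / gamma * Rt) * exp (- (beta / gamma) * Rt))
      with (beta * St * (exp (beta / gamma * Rt) * exp (- (beta / gamma) * Rt))) by ring.
    rewrite H1. field. lra.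
  - unfold phi_of.
    assert (Hp : 0 < psi u) by auto.
    match type of Heq with _ = ?B => assert (HB : 0 < B) end.
    { apply Rmult_lt_0_compat; [lra|].
      pose proof (exp_pos (- delta * RInt (fun xi : R => / (xi * psi xi)) u (exp (- (beta / gamma) * Rt)))).
      pose proof (exp_pos (beta / gamma * Rt)).
      assert (0 < St * exp (beta / gamma * Rt)) by nra.
      apply Rplus_lt_le_0_compat; [nra|].
      apply Rmult_le_pos; [|exact Hnn]. nra. }
    rewrite <- Heq. rewrite <- Heq in HB. lra.
Qed.
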